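(* Let $X$ be a real vector space and let $\{x_i\}_{i\in I}$ be an algebraic (Hamel) basis of $X$. Then $0\notin cl_c(\{x_i\}_{i\in I})$.
   Context: For $A\subseteq X$, $cor(A):=\{x\in A:\ \forall x'\in X\ \exists \lambda'>0 \text{ with } x+\lambda x'\in A\ \forall\lambda\in[0,\lambda']\}$. The core convex topology $\tau_c$ on $X$ is the topology whose open sets are the unions of families of convex sets $B\subseteq X$ with $cor(B)=B$; $cl_c$ denotes closure in $\tau_c$. *)

(* Defs.v *)
From mathcomp Require Import all_boot all_order all_algebra.
From mathcomp Require Import all_classical all_reals.
From mathcomp Require Import convex.
Set Implicit Arguments. Unset Strict Implicit. Unset Printing Implicit Defensive.
Import Order.TTheory GRing.Theory Num.Theory.
Local Open Scope classical_set_scope.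
Local Open Scope ring_scope.

Section core_convex.
Variables (R : realType) (X : lmodType R).

Definition cor (A : set X) : set X :=
  [set x | A x /\ forall x' : X, exists2 l' : R, 0 < l' &
     forall l : R, 0 <= l -> l <= l' -> A (x + l *: x')].

Definition cconvex (A : set X) : Prop :=
  convex_set (A : set (convex_lmodType X)).

Definition core_open (U : set X) : Prop :=
  exists F : set (set X),
    (forall B, F B -> cconvex B /\ cor B = B) /\ U = \bigcup_(B in F) B.

Definition core_closed (C : set X) : Prop := core_open (~` C).

Definition cl_c (A : set X) : set X :=
  [set x | forall C, core_closed C -> A `<=` C -> C x].

Definition lin_indep (I : eqType) (b : I -> X) : Prop :=
  forall (s : seq I) (c : I -> R), uniq s ->
    \sum_(i <- s) c i *: b i = 0 -> forall i, i \in s -> c i = 0.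

Definition spanning (I : eqType) (b : I -> X) : Prop :=
  forall v : X, exists (s : seq I) (c : I -> R), v = \sum_(i <- s) c i *: b i.

Definition hamel_basis (I : eqType) (b : I -> X) : Prop :=
  lin_indep b /\ spanning b.

End core_convex.

(* Main.v *)
Require Import Defs.
From mathcomp Require Import all_boot all_order all_algebra.
From mathcomp Require Import all_classical all_reals.
From mathcomp Require Import convex interval_inference lra.
Import Order.TTheory GRing.Theory Num.Theory.
Local Open Scope classical_set_scope.
Local Open Scope ring_scope.

Section S.
Variables (R : realType) (X : lmodType R) (I : eqType) (b : I -> X).

Definition rep (L : seq (I * R)) : X := \sum_(p <- L) p.2 *: b p.1.
Definition csum (L : seq (I * R)) : R := \sum_(p <- L) p.2.

Lemma part_sum (V : nmodType) (L : seq (I * R)) (F : I * R -> V) :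
  \sum_(p <- L) F p = \sum_(i <- undup (map fst L)) \sum_(p <- L | p.1 == i) F p.
Proof.
rewrite [RHS](eq_bigr (fun i => \sum_(p <- L) if p.1 == i then F p else 0)); last first.
  by move=> i _; rewrite big_mkcond.
rewrite [RHS]exchange_big; apply: eq_big_seq => p pL; rewrite -big_mkcond /=.
have hp : p.1 \in undup (map fst L).
  by rewrite mem_undup; apply/mapP; exists p.
rewrite (eq_bigl (fun i => i == p.1)); last by move=> i; rewrite eq_sym.
by rewrite -big_filter (filter_pred1_uniq (undup_uniq _) hp) big_seq1.
Qed.

Lemma key (L : seq (I * R)) : lin_indep b -> rep L = 0 -> csum L = 0.
Proof.
move=> li h0.
pose c i := \sum_(p <- L | p.1 == i) p.2.
have := li (undup (map fst L)) c (undup_uniq _).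
have e1 : \sum_(i <- undup (map fst L)) c i *: b i = rep L.
  rewrite /rep (part_sum _ L (fun p => p.2 *: b p.1)); apply: eq_bigr => i _.
  rewrite /c scaler_suml; apply: eq_bigr => p /eqP -> //.
rewrite e1 => /(_ h0) hc.
by rewrite /csum part_sum big1_seq // => i [_ /hc].
Qed.
Definition scaleL (k : R) (L : seq (I * R)) := map (fun p => (p.1, k * p.2)) L.

Lemma rep_cat L M : rep (L ++ M) = rep L + rep M.
Proof. by rewrite /rep big_cat. Qed.
Lemma csum_cat L M : csum (L ++ M) = csum L + csum M.
Proof. by rewrite /csum big_cat. Qed.
Lemma rep_scale k L : rep (scaleL k L) = k *: rep L.
Proof.
rewrite /rep /scaleL big_map scaler_sumr; apply: eq_bigr => p _ /=.
by rewrite scalerA.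
Qed.
Lemma csum_scale k L : csum (scaleL k L) = k * csum L.
Proof. by rewrite /csum /scaleL big_map mulr_sumr. Qed.

Definition U : set X := [set v | exists L, v = rep L /\ csum L < 1].

Lemma U_cor : spanning b -> cor U = U.
Proof.
move=> sp; apply/seteqP; split => [x [] //|x [L [-> ha]]].
split; first by exists L.
move=> x'; have [s [c ->]] := sp x'.
pose M := map (fun i => (i, c i)) s.
have eM : \sum_(i <- s) c i *: b i = rep M by rewrite /rep /M big_map.
rewrite eM; set a := csum L; set d := csum M.
have hd : 0 < `|d| + 1 by rewrite ltr_pwDr // normr_ge0.
have ha' : 0 < 1 - a by rewrite subr_gt0.
exists ((1 - a) / (`|d| + 1)); first by rewrite divr_gt0.
move=> l l0 l1; exists (L ++ scaleL l M); split.
  by rewrite rep_cat rep_scale.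
rewrite csum_cat csum_scale -/a -/d.
have h1 : l * d <= l * `|d| by rewrite ler_wpM2l // real_ler_norm // num_real.
have h2 : l * `|d| <= (1 - a) / (`|d| + 1) * `|d| by rewrite ler_wpM2r // normr_ge0.
have h3 : (1 - a) / (`|d| + 1) * (`|d| + 1) = 1 - a by rewrite divfK // gt_eqF.
have h4 : 0 < (1 - a) / (`|d| + 1) by rewrite divr_gt0.
have h5 : (1 - a) / (`|d| + 1) * `|d| < (1 - a) / (`|d| + 1) * (`|d| + 1).
  by rewrite ltr_pM2l // ltrDl.
rewrite h3 in h5.
by rewrite -ltrBrDl (le_lt_trans h1 (le_lt_trans h2 h5)).
Qed.

Lemma U_convex : cconvex U.
Proof.
move=> x y lam; rewrite !inE => -[L [-> hL]] [M [-> hM]].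
exists (scaleL (lam%:inum) L ++ scaleL (1 - lam%:inum) M); split.
  by rewrite rep_cat !rep_scale.
rewrite csum_cat !csum_scale.
have l0 : 0 <= lam%:inum by [].
have l1 : lam%:inum <= 1 by [].
move: l0 l1; set t := lam%:num => l0 l1.
have [t0|t0] := eqVneq t 0.
  by rewrite t0 mul0r add0r subr0 mul1r.
have tp : 0 < t by rewrite lt_neqAle eq_sym t0.
nra.
Qed.
End S.
Arguments U {R X I}.
Arguments rep {R X I}.
Arguments csum {R I}.
Arguments key {R X I b}.
Arguments U_convex {R X I}.
Arguments U_cor {R X I b}.

Theorem lemma3p14 (R : realType) (X : lmodType R) (I : eqType) (b : I -> X) :
  hamel_basis b -> ~ cl_c (range b) 0.
Proof.
move=> [li sp] hcl.
have hC : core_closed (~` U b).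
  exists [set U b]; split.
    by move=> B ->; split; [exact: U_convex | exact: U_cor].
  by rewrite setCK bigcup_set1.
have hsub : range b `<=` ~` U b.
  move=> _ [j _ <-] [L [eL hL]].
  have : rep b (L ++ [:: (j, -1)]) = 0.
    by rewrite rep_cat /rep big_seq1 /= scaleN1r -/(rep b L) -eL subrr.
  move/(key _ li); rewrite csum_cat /csum big_seq1 /= => /eqP.
  rewrite addr_eq0 opprK -/(csum L) => /eqP e.
  by rewrite e ltxx in hL.
apply: (hcl _ hC hsub); exists [::]; split; first by rewrite /rep big_nil.
by rewrite /csum big_nil ltr01.
Qed.
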